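(* Let $0<\eta\leq1$ be real and $d\geq1$ an integer. Let $F$ be a 3-graph and $A,B\subseteq V(F)$ with $A\cap B=\emptyset$, $|A|\geq 4d\,e^d/\eta^d$ and $|B|\geq d/\eta$. Assume that $A$ induces a clique in $F$ and $d(A,A,B)\geq\eta$. Then $F$ contains a tight path of the form $a_1a_2b_1a_3a_4b_2\dots a_{2d-1}a_{2d}b_da_{2d+1}a_{2d+2}$ with distinct vertices $a_i\in A$ ($i\in[2d+2]$) and $b_j\in B$ ($j\in[d]$).
   Context: A 3-graph is a 3-uniform hypergraph. A tight path with vertex sequence $v_1v_2\dots v_s$ has edges $\{v_i,v_{i+1},v_{i+2}\}$ for $i\in[s-2]$. For $A,B,C\subseteq V(F)$, $E(A,B,C)$ is the set of ordered triples $(a,b,c)\in A\times B\times C$ of distinct vertices with $abc\in E(F)$, and $d(A,B,C)=|E(A,B,C)|$ divided by the number of ordered triples of distinct vertices in $A\times B\times C$. *)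

(* Defs.v *)
From mathcomp Require Import all_boot all_order all_algebra.
From mathcomp Require Import all_classical all_reals all_analysis.
Set Implicit Arguments. Unset Strict Implicit. Unset Printing Implicit Defensive.
Import Order.TTheory GRing.Theory Num.Theory.

Definition is_3graph (T : finType) (E : {set {set T}}) : Prop :=
  forall e, e \in E -> #|e| = 3%N.

Definition is_clique3 (T : finType) (E : {set {set T}}) (A : {set T}) : Prop :=
  forall x y z, x \in A -> y \in A -> z \in A ->
    x != y -> y != z -> x != z -> [set x; y; z] \in E.

Definition edge_triples (T : finType) (E : {set {set T}}) (A B C : {set T}) :
  {set T * T * T} :=
  [set t : T * T * T | [&& t.1.1 \in A, t.1.2 \in B, t.2 \in C,
     t.1.1 != t.1.2, t.1.2 != t.2, t.1.1 != t.2 &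
     [set t.1.1; t.1.2; t.2] \in E]].

Definition dist_triples (T : finType) (A B C : {set T}) : {set T * T * T} :=
  [set t : T * T * T | [&& t.1.1 \in A, t.1.2 \in B, t.2 \in C,
     t.1.1 != t.1.2, t.1.2 != t.2 & t.1.1 != t.2]].

Definition density (R : realType) (T : finType) (E : {set {set T}})
  (A B C : {set T}) : R :=
  (#|edge_triples E A B C|%:R / #|dist_triples A B C|%:R)%R.

Definition tight_path (T : finType) (E : {set {set T}}) (s : seq T) : Prop :=
  uniq s /\
  forall (x0 : T) (i : nat), (i + 2 < size s)%N ->
    [set nth x0 s i; nth x0 s i.+1; nth x0 s i.+2] \in E.

(* The vertex sequence a_1 a_2 b_1 a_3 a_4 b_2 ... a_{2d-1} a_{2d} b_d a_{2d+1} a_{2d+2}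
   (0-indexed: a 0, a 1, b 0, a 2, a 3, b 1, ..., a (2d), a (2d+1)). *)
Definition ab_pattern (T : Type) (d : nat) (a : nat -> T) (b : nat -> T) : seq T :=
  flatten [seq [:: a (2 * j)%N; a (2 * j).+1; b j] | j <- iota 0 d]
    ++ [:: a (2 * d)%N; a (2 * d).+1].

(* Main.v *)
Require Import Defs.
From mathcomp Require Import all_boot all_order all_algebra.
From mathcomp Require Import all_classical all_reals all_analysis.
From mathcomp Require Import zify ring lra.
Import Order.TTheory GRing.Theory Num.Theory.

Lemma ffact_mono (j m : nat) : j ^_ m <= j.+1 ^_ m.
Proof.
elim: m j => [|m IH] [|j] //.
rewrite ffactSS [X in _ <= X]ffactSS.
by apply: leq_mul => //; apply: IH.
Qed.

Lemma ffact_inc (j d : nat) : j.+1 ^_ d.+1 = j ^_ d.+1 + d.+1 * j ^_ d.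
Proof.
rewrite ffactSS ffactnSr.
case: (leqP d j) => hd.
  have -> : j.+1 = (j - d) + d.+1 by lia.
  by rewrite mulnDl mulnC.
by rewrite ffact_small // !muln0.
Qed.

Lemma tangent_gen (f : nat -> nat) :
  (forall j, f j <= f j.+1) ->
  (forall j, f j.+1 - f j <= f j.+2 - f j.+1) ->
  forall k t, f t + k * (f t.+1 - f t) <= f k + t * (f t.+1 - f t).
Proof.
move=> fm dm.
have Dm : forall i j, i <= j -> f i.+1 - f i <= f j.+1 - f j.
  move=> i j /subnKC <-; elim: (j - i) => [|s IH]; first by rewrite addn0.
  by apply: leq_trans IH _; rewrite addnS; apply: dm.
have fmon : forall i j, i <= j -> f i <= f j.
  move=> i j /subnKC <-; elim: (j - i) => [|s IH]; first by rewrite addn0.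
  by apply: leq_trans IH _; rewrite addnS; apply: fm.
move=> k t.
set D := f t.+1 - f t.
case: (leqP t k) => htk.
  have H : forall s, f t + s * D <= f (t + s).
    elim=> [|s IH]; first by rewrite ?addn0 ?mul0n ?addn0.
    have h1 := Dm t (t + s) (leq_addr _ _).
    have h2 := fm (t + s).
    rewrite addnS mulSn addnCA addnC.
    apply: (leq_trans (n := (f (t + s).+1 - f (t + s)) + f (t + s))).
      by rewrite addnC; apply: leq_add.
    by rewrite subnK.
  have := H (k - t); rewrite subnKC // => Hk.
  have -> : k * D = (k - t) * D + t * D by rewrite -mulnDl subnK.
  by rewrite addnA leq_add2r.
have H : forall s, f (k + s) <= f k + s * (f (k + s).+1 - f (k + s)).
  elim=> [|s IH]; first by rewrite ?addn0 ?mul0n ?addn0.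
  have h1 := Dm (k + s) (k + s).+1 (leqnSn _).
  have h2 := fm (k + s).
  rewrite addnS.
  apply: (leq_trans (n := f k + s.+1 * (f (k + s).+1 - f (k + s)))); last first.
    by rewrite leq_add2l leq_mul2l h1 orbT.
  rewrite -[X in X <= _](subnK h2) mulSn addnCA leq_add2l.
  by [].
have htk' : k <= t by exact: ltnW.
have := H (t - k); rewrite subnKC // => Ht.
have -> : t * D = (t - k) * D + k * D by rewrite -mulnDl subnK.
by rewrite addnA leq_add2r.
Qed.

Lemma ffact_tangent (d k t : nat) :
  t ^_ d + k * (t.+1 ^_ d - t ^_ d) <= k ^_ d + t * (t.+1 ^_ d - t ^_ d).
Proof.
apply: (@tangent_gen (fun j => j ^_ d)) => j; first exact: ffact_mono.
case: d => [|d]; first by rewrite !ffactn0.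
rewrite !ffact_inc !addKn leq_mul2l.
by rewrite ffact_mono orbT.
Qed.

Lemma jensen_ffact (X : finType) (P : {set X}) (k : X -> nat) (d t : nat) :
  #|P| * t <= \sum_(p in P) k p ->
  #|P| * t ^_ d <= \sum_(p in P) (k p) ^_ d.
Proof.
move=> hS.
set D := t.+1 ^_ d - t ^_ d.
have H : \sum_(p in P) (t ^_ d + k p * D) <= \sum_(p in P) ((k p) ^_ d + t * D).
  by apply: leq_sum => p _; apply: ffact_tangent.
rewrite !big_split /= !sum_nat_const -big_distrl /= in H.
have H2 : #|P| * (t * D) <= (\sum_(p in P) k p) * D.
  by rewrite mulnA leq_mul2r hS orbT.
rewrite -(leq_add2r ((\sum_(p in P) k p) * D)).
apply: (leq_trans H).
by rewrite leq_add2l.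
Qed.

Lemma ffact_ratio (d t : nat) : d <= t ->
  d`! * t.+1 ^ d <= t ^_ d * d.+1 ^ d.
Proof.
move=> hdt.
have E1 : forall c, c ^ d = \prod_(i < d) c by move=> c; rewrite prod_nat_const card_ord.
rewrite -ffactnn !ffact_prod !E1 -!big_split /=.
apply: leq_prod => i _.
have hi := ltn_ord i.
nia.
Qed.

Lemma ffact_le_exp (m d : nat) : m ^_ d <= m ^ d.
Proof.
have E1 : m ^ d = \prod_(i < d) m by rewrite prod_nat_const card_ord.
rewrite ffact_prod E1; apply: leq_prod => i _; exact: leq_subr.
Qed.

Definition GV {X : finType} (G : {set X * X}) (V : {set X}) := [set p in G | (p.1 \in V) && (p.2 \in V)].
Definition nbr {X : finType} (G : {set X * X}) (V : {set X}) v := [set u in V | (v, u) \in G].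

Lemma core (X : finType) (G : {set X * X})
  (Gsym : forall x y, (x, y) \in G -> (y, x) \in G) (c : nat) : forall V : {set X}, 2 * c * #|V| < #|GV G V| ->
  exists W : {set X}, W \subset V /\ 0 < #|W| /\
     forall v, v \in W -> c < #|nbr G W v|.
Proof.
move=> V; have [N hV] : exists N, #|V| <= N by exists #|V|.
elim: N V hV => [|N IH] V hV hG.
  move: hV; rewrite leqn0 => /eqP/cards0_eq V0.
  exfalso; move: hG; rewrite V0.
  have -> : GV G finset.set0 = finset.set0 by apply/setP => p; rewrite !inE; case: (p \in G).
  by rewrite !cards0 muln0.
case: (boolP [forall v in V, c < #|nbr G V v|]) => [/forall_inP hall|].
  exists V; split => //; split => //.
  have : 0 < #|GV G V| by apply: leq_ltn_trans hG.
  rewrite !card_gt0 => /finset.set0Pn [p]; rewrite !inE => /and3P [_ h _].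
  by apply/finset.set0Pn; exists p.1.
rewrite negb_forall_in => /exists_inP [v vV]; rewrite -leqNgt => hdeg.
set V' := V :\ v.
have cV : #|V| = #|V'|.+1 by rewrite (cardsD1 v V) vV.
have sub : GV G V \subset GV G V' :|: ((fun u => (v, u)) @: nbr G V v :|: (fun u => (u, v)) @: nbr G V v).
  apply/fintype.subsetP => p; rewrite !inE => /and3P [pG p1 p2].
  case: (eqVneq p.1 v) => h1.
    apply/orP; right; apply/orP; left; apply/imsetP; exists p.2.
      by rewrite !inE p2 -h1 -surjective_pairing.
    by rewrite -h1 -surjective_pairing.
  case: (eqVneq p.2 v) => h2.
    apply/orP; right; apply/orP; right; apply/imsetP; exists p.1.
      by rewrite !inE p1 Gsym // -h2 -surjective_pairing.
    by rewrite -h2 -surjective_pairing.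
  by rewrite pG p1 p2.
have cG : #|GV G V| <= #|GV G V'| + 2 * c.
  apply: leq_trans (subset_leq_card sub) _.
  apply: leq_trans (leq_card_setU _ _) _.
  rewrite leq_add2l.
  apply: leq_trans (leq_card_setU _ _) _.
  have := leq_imset_card (fun u => (v, u)) (nbr G V v).
  have := leq_imset_card (fun u => (u, v)) (nbr G V v).
  move=> h1 h2; rewrite mul2n -addnn; apply: leq_add; [exact: leq_trans h2 hdeg|exact: leq_trans h1 hdeg].
have [W [WV [W0 Wd]]] : exists W : {set X}, W \subset V' /\ 0 < #|W| /\
     forall v, v \in W -> c < #|nbr G W v|.
  apply: IH; first by rewrite -ltnS -cV.
  move: hG; rewrite cV; nia.
exists W; split => //.
exact: (fintype.subset_trans WV (finset.subsetDl V [set v])).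
Qed.

Lemma grow (X : finType) (G : {set X * X})
  (Gsym : forall x y, (x, y) \in G -> (y, x) \in G)
  (Girr : forall x y, (x, y) \in G -> x != y) (W : {set X}) (c : nat) : 0 < #|W| ->
  (forall v, v \in W -> c < #|nbr G W v|) ->
  forall L, L <= c.+1 -> exists s : seq X, [/\ size s = L.+1, uniq s,
     all (fun x => x \in W) s &
     forall x0 i, i < L -> (nth x0 s i, nth x0 s i.+1) \in G].
Proof.
rewrite card_gt0 => /finset.set0Pn [w wW] Wd; elim=> [|L IH] hL.
  by exists [:: w]; split => //=; rewrite wW.
have [s [ss us As Gs]] := IH (ltnW hL).
case: s ss us As Gs => [//|v s] ss us As Gs.
have vW : v \in W by move: As => /= /andP [].
have hN := Wd v vW.
have : ~~ (nbr G W v \subset [set x in s]).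
  apply/negP => hsub.
  have : #|nbr G W v| <= #|[set x in s]| by apply: subset_leq_card.
  have cs : #|[set x in s]| = size s.
    by rewrite cardsE; apply/card_uniqP; move: us => /= /andP [].
  rewrite cs; move: ss => [->]; lia.
case/fintype.subsetPn => u; rewrite !inE => /andP [uW vu] us'.
exists [:: u, v & s]; split.
- by move: ss => /= [->].
- rewrite /= in_cons negb_or us' andbT; move: us => /= ->; rewrite andbT.
  by apply: Girr; apply: Gsym.
- by rewrite /= uW.
move=> x0 [|i] hi /=; first by apply: Gsym.
by apply: Gs.
Qed.


Definition hpat {T : Type} (a b : nat -> T) (i : nat) : T :=
  if i %% 3 == 2 then b (i %/ 3) else a (2 * (i %/ 3) + i %% 3).

Lemma pattern_mkseq (T : Type) (d : nat) (a b : nat -> T) :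
  ab_pattern d a b = mkseq (hpat a b) (3 * d + 2).
Proof.
have H : forall d, flatten [seq [:: a (2 * j)%N; a (2 * j).+1; b j] | j <- iota 0 d]
   = mkseq (hpat a b) (3 * d).
  elim=> [|n IH] //.
  have -> : iota 0 n.+1 = iota 0 n ++ [:: n] by rewrite -addn1 iotaD.
  rewrite map_cat flatten_cat IH /mkseq.
  rewrite mulnSr iotaD map_cat add0n /=.
  rewrite /hpat.
  have -> : (3 * n) %% 3 = 0 by lia.
  have -> : (3 * n).+1 %% 3 = 1 by lia.
  have -> : (3 * n).+2 %% 3 = 2 by lia.
  have -> : (3 * n) %/ 3 = n by lia.
  have -> : (3 * n).+1 %/ 3 = n by lia.
  have -> : (3 * n).+2 %/ 3 = n by lia.
  by rewrite /= addn0 addn1.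
rewrite /ab_pattern H /mkseq iotaD map_cat /= add0n /hpat.
have -> : (3 * d) %% 3 = 0 by lia.
have -> : (3 * d).+1 %% 3 = 1 by lia.
have -> : (3 * d) %/ 3 = d by lia.
have -> : (3 * d).+1 %/ 3 = d by lia.
by rewrite /= addn0 addn1.
Qed.

Lemma set3_swap23 (T : finType) (x y z : T) : [set x; y; z] = [set x; z; y].
Proof. by apply/setP => w; rewrite !inE; case: (w == x); case: (w == y); case: (w == z). Qed.

Lemma set3_rot (T : finType) (x y z : T) : [set x; y; z] = [set y; z; x].
Proof. by apply/setP => w; rewrite !inE; case: (w == x); case: (w == y); case: (w == z). Qed.

Lemma tight_from (T : finType) (E : {set {set T}}) (A B : {set T}) (d : nat)
  (a b : nat -> T) :
  [disjoint A & B] ->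
  (forall i, (i < 2 * d + 2)%N -> a i \in A) ->
  (forall j, (j < d)%N -> b j \in B) ->
  (forall i i', (i < 2 * d + 2)%N -> (i' < 2 * d + 2)%N -> a i = a i' -> i = i') ->
  (forall j j', (j < d)%N -> (j' < d)%N -> b j = b j' -> j = j') ->
  (forall x j, (x < 2 * d + 1)%N -> (j < d)%N -> [set a x; a x.+1; b j] \in E) ->
  tight_path E (ab_pattern d a b).
Proof.
move=> dAB aA bB ai bi hE.
have nAB : forall i j, (i < 2 * d + 2)%N -> (j < d)%N -> a i != b j.
  move=> i j hi hj; apply/eqP => e.
  have := aA i hi; rewrite e => hA; have hB := bB j hj.
  by rewrite (disjointFr dAB hA) in hB.
rewrite pattern_mkseq; split.
  rewrite /mkseq map_inj_in_uniq ?iota_uniq // => i i'.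
  rewrite !mem_iota !add0n => /andP [_ hi] /andP [_ hi'].
  rewrite /hpat.
  case: ifP => h1; case: ifP => h2.
  - move=> /bi; move=> H; have := H ltac:(lia) ltac:(lia); lia.
  - move=> e; exfalso; move: (nAB (2 * (i' %/ 3) + i' %% 3) (i %/ 3) ltac:(lia) ltac:(lia)).
    by rewrite e eqxx.
  - move=> e; exfalso; move: (nAB (2 * (i %/ 3) + i %% 3) (i' %/ 3) ltac:(lia) ltac:(lia)).
    by rewrite e eqxx.
  - move=> /ai; move=> H; have := H ltac:(lia) ltac:(lia); lia.
move=> x0 i; rewrite size_mkseq => hi.
rewrite !nth_mkseq; try lia.
rewrite /hpat.
have : (i %% 3 = 0 \/ i %% 3 = 1 \/ i %% 3 = 2)%N by lia.
case=> [r0|[r1|r2]].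
- have -> : (i.+1 %% 3 = 1)%N by lia.
  have -> : (i.+2 %% 3 = 2)%N by lia.
  have -> : (i.+1 %/ 3 = i %/ 3)%N by lia.
  have -> : (i.+2 %/ 3 = i %/ 3)%N by lia.
  rewrite r0 /= addn0.
  by rewrite addn1 hE //; lia.
- have -> : (i.+1 %% 3 = 2)%N by lia.
  have -> : (i.+2 %% 3 = 0)%N by lia.
  have -> : (i.+1 %/ 3 = i %/ 3)%N by lia.
  have -> : (i.+2 %/ 3 = (i %/ 3).+1)%N by lia.
  rewrite r1 /= addn0 set3_swap23.
  have -> : (2 * (i %/ 3).+1 = (2 * (i %/ 3) + 1).+1)%N by lia.
  by rewrite hE //; lia.
- have -> : (i.+1 %% 3 = 0)%N by lia.
  have -> : (i.+2 %% 3 = 1)%N by lia.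
  have -> : (i.+1 %/ 3 = (i %/ 3).+1)%N by lia.
  have -> : (i.+2 %/ 3 = (i %/ 3).+1)%N by lia.
  rewrite r2 /= addn0 addn1 set3_rot.
  by rewrite hE //; lia.
Qed.

Local Open Scope ring_scope.

Lemma pow_step (R : realType) (k : nat) : (0 < k)%N ->
  (k.+1%:R : R) ^+ k <= k%:R ^+ k * expR 1.
Proof.
move=> k0.
have kp : (0 : R) < k%:R by rewrite ltr0n.
have -> : (k.+1%:R : R) = k%:R * (1 + k%:R^-1).
  by rewrite mulrDr mulr1 mulfV ?gt_eqF // -addn1 natrD.
rewrite exprMn ler_pM2l ?exprn_gt0 //.
have -> : expR 1 = expR (k%:R^-1) ^+ k :> R.
  by rewrite -expRM_natl mulfV ?gt_eqF.
apply: lerXn2r; last exact: expR_ge1Dx.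
  by rewrite nnegrE addr_ge0 // invr_ge0 ltW.
by rewrite nnegrE ltW // expR_gt0.
Qed.

Lemma fact_bound (R : realType) (d : nat) : (1 <= d)%N ->
  (d.+1%:R : R) ^+ d * expR 1 <= 2 * (d`!)%:R * expR 1 ^+ d.
Proof.
have e0 : (0 : R) < expR 1 by apply: expR_gt0.
elim: d => // d IH _.
case: d IH => [_|d IH].
  by rewrite !expr1 /= mulr1 ler_wpM2r // ltW.
have := IH isT => {}IH.
apply: (le_trans (y := (d.+2%:R ^+ d.+2 * expR 1) * expR 1)).
  by rewrite ler_pM2r // pow_step.
apply: (le_trans (y := d.+2%:R * (2 * (d.+1`!)%:R * expR 1 ^+ d.+1) * expR 1)).
  have -> : (d.+2%:R : R) ^+ d.+2 * expR 1 * expR 1 = d.+2%:R * (d.+2%:R ^+ d.+1 * expR 1) * expR 1.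
    by rewrite !mulrA -exprS.
  by rewrite ler_pM2r // ler_pM2l ?ltr0n.
by rewrite [in X in _ <= X]factS natrM [in X in _ <= X]exprS; rewrite le_eqVlt; apply/orP; left; apply/eqP; ring.
Qed.

Lemma eqle (R : realType) (x y : R) : x = y -> x <= y.
Proof. by move=> ->. Qed.

Lemma numeric_contra (R : realType) (nr dr e Ed H M Q Fd D1 : R) :
 (nr * nr - nr) * Fd * Q <= 4 * dr * nr * M * D1 -> D1 * e <= 2 * Fd * Ed ->
 H * M < Q -> 4 * dr * Ed <= nr * H -> 9/4 <= e -> e <= Ed -> 0 < H -> H <= 1 ->
 0 < M -> 0 < Fd -> 1 <= dr -> 0 <= D1 -> False.
Proof.
move=> h1 h2 h3 h4 h5 h6 h7 h8 h9 h10 h11 h12.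
have e0 : 0 < e by lra.
have y1 : e <= dr * Ed by nra.
have n1 : 9 <= nr * H by nra.
have n2 : 9 <= nr by nra.
have s1 : (nr * nr - nr) * Fd * Q * e <= 4 * dr * nr * M * (2 * Fd * Ed).
  apply: (le_trans (y := 4 * dr * nr * M * D1 * e)).
    by rewrite ler_wpM2r // ltW.
  rewrite -mulrA ler_wpM2l //.
  apply: mulr_ge0; [apply: mulr_ge0; [nra|nra]|exact: ltW].
have s2 : (nr - 1) * Q * e <= 8 * dr * M * Ed.
  have hp : 0 < nr * Fd by nra.
  rewrite -(ler_pM2l hp).
  have -> : nr * Fd * ((nr - 1) * Q * e) = (nr * nr - nr) * Fd * Q * e by ring.
  by apply: le_trans s1 _; apply: eqle; ring.
have s3 : (nr - 1) * (H * M) * e < (nr - 1) * Q * e.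
  rewrite ltr_pM2r // ltr_pM2l //; lra.
have s4 : (nr - 1) * H * e < 8 * dr * Ed.
  have : (nr - 1) * H * e * M < 8 * dr * Ed * M.
    apply: (lt_le_trans (y := (nr - 1) * Q * e)).
      by apply: le_lt_trans s3; apply: eqle; ring.
    by apply: le_trans s2 _; apply: eqle; ring.
  by rewrite ltr_pM2r.
have s5 : 4 * dr * Ed - 1 <= (nr - 1) * H by nra.
nra.
Qed.

Lemma set3_swap12 (T : finType) (x y z : T) : [set x; y; z] = [set y; x; z].
Proof. by apply/setP => w; rewrite !inE; case: (w == x); case: (w == y); case: (w == z). Qed.

Theorem lemma5p5 (R : realType) (eta : R) (d : nat) (T : finType)
  (E : {set {set T}}) (A B : {set T}) :
  0 < eta -> eta <= 1 -> (1 <= d)%N ->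
  is_3graph E ->
  [disjoint A & B] ->
  4 * d%:R * expR d%:R / eta ^+ d <= #|A|%:R ->
  d%:R / eta <= #|B|%:R ->
  is_clique3 E A ->
  eta <= density R E A A B ->
  exists (a : nat -> T) (b : nat -> T),
    (forall i, (i < 2 * d + 2)%N -> a i \in A) /\
    (forall j, (j < d)%N -> b j \in B) /\
    tight_path E (ab_pattern d a b).
Proof.
move=> eta0 eta1 d1 _ dAB hA hB _ hdens.
set n := #|A|; set m := #|B|.
have hne : forall u v, u \in A -> v \in B -> u != v.
  move=> u v uA vB; apply/eqP => e; move: vB; rewrite -e.
  by rewrite (disjointFr dAB uA).
pose P := [set p : T * T | [&& p.1 \in A, p.2 \in A & p.1 != p.2]].
pose N (p : T * T) := [set b in B | [set p.1; p.2; b] \in E].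
pose Inj (S : {set T}) := [set f : {ffun 'I_d -> T} | injectiveb f && [forall i, f i \in S]].
have cardInj : forall S, #|Inj S| = (#|S| ^_ d)%N.
  move=> S; rewrite -[in RHS](card_ord d) -card_inj_ffuns_on.
  apply: eq_card => f; rewrite !inE andbC; congr (_ && _).
have cardP : #|P| = (n * n - n)%N.
  pose D := [set (a, a) | a in A].
  have cD : #|D| = n by rewrite card_imset // => x y [].
  have eP : P = finset.setX A A :\: D.
    apply/setP => [[x y]]; rewrite !inE /=.
    case: (boolP (x \in A)) => xA; last by rewrite andbF.
    case: (boolP (y \in A)) => yA; last by rewrite !andbF.
    rewrite !andbT.
    case: (eqVneq x y) => [->|nxy] /=.
      have : (y, y) \in D by apply/imsetP; exists y.
      by move=> ->.
    case: (boolP ((x, y) \in D)) => //.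
    by move=> /imsetP [z _ [e1 e2]]; move: nxy; rewrite e1 e2 eqxx.
  rewrite eP cardsD cardsX.
  have -> : finset.setX A A :&: D = D.
    apply/finset.setIidPr/fintype.subsetP => p /imsetP [z zA ->]; by rewrite finset.in_setX zA.
  by rewrite cD.
have distE : dist_triples A A B = finset.setX P B.
  apply/setP => [[[x y] z]]; rewrite !inE /=.
  case: (boolP (x \in A)) => xA //=; case: (boolP (y \in A)) => yA //=.
  case: (boolP (z \in B)) => zB //=; last by rewrite !andbF.
  by rewrite (hne _ _ yA zB) (hne _ _ xA zB) !andbT.
have edgeS : #|edge_triples E A A B| = (\sum_(p in P) #|N p|)%N.
  have -> : (\sum_(p in P) #|N p| = \sum_(p in P) \sum_(b | (b \in B) && ([set p.1; p.2; b] \in E)) 1)%N.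
    by apply: eq_bigr => p _; rewrite sum1dep_card.
  rewrite pair_big_dep /= sum1dep_card; apply: eq_card => [[[x y] z]]; rewrite !inE /=.
  case: (boolP (x \in A)) => xA //=; case: (boolP (y \in A)) => yA //=.
  case: (boolP (z \in B)) => zB //=; last by rewrite !andbF.
  by rewrite (hne _ _ yA zB) (hne _ _ xA zB) /=.
have e0 : (0 : R) < expR 1 by apply: expR_gt0.
have he : (9 / 4 : R) <= expR 1.
  have -> : expR (1 : R) = expR (2^-1) ^+ 2.
    by rewrite -expRM_natl; congr expR; rewrite mulfV // pnatr_eq0.
  have h1 : (1 + 2^-1 : R) <= expR (2^-1) by apply: expR_ge1Dx.
  have h2 : (0 : R) <= 1 + 2^-1 by rewrite addr_ge0 // invr_ge0 ler0n.
  apply: (le_trans (y := (1 + 2^-1) ^+ 2)).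
    by rewrite expr2; apply: eqle; field.
  by apply: lerXn2r; rewrite ?nnegrE // (le_trans h2 h1).
have hEd : expR d%:R = expR 1 ^+ d :> R by rewrite -expRM_natl mulr1.
have hEde : expR 1 <= expR 1 ^+ d :> R.
  have [d' ->] : exists d', d = d'.+1 by exists d.-1; lia.
  have h1 : (1 : R) <= expR 1 ^+ d' by apply: exprn_ege1; lra.
  rewrite exprS; nra.
have H0 : (0 : R) < eta ^+ d by rewrite exprn_gt0.
have H1 : eta ^+ d <= 1 by rewrite exprn_ile1 // ltW.
have hA' : 4 * d%:R * expR 1 ^+ d <= n%:R * eta ^+ d.
  by move: hA; rewrite -hEd ler_pdivrMr.
have dr1 : (1 : R) <= d%:R by rewrite ler1n.
have hn : (9 <= n)%N.
  rewrite -(ler_nat R); apply: (le_trans (y := n%:R * eta ^+ d)); last first.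
    by rewrite ler_piMr.
  apply: le_trans hA'. nra.
have hB' : d%:R <= eta * m%:R by move: hB; rewrite ler_pdivrMr // mulrC.
have hdm : (d <= m)%N.
  by rewrite -(ler_nat R); apply: (le_trans hB'); rewrite ler_piMl.
set t := Num.truncn (eta * m%:R).
have em0 : 0 <= eta * m%:R by rewrite mulr_ge0 // ltW.
have ht1 : t%:R <= eta * m%:R by rewrite truncn_le.
have ht2 : eta * m%:R < t.+1%:R by apply: truncnS_gt.
have hdt : (d <= t)%N by rewrite truncn_ge_nat.
have hPpos : (0 < #|P|)%N.
  rewrite cardP subn_gt0 -{1}(muln1 n) ltn_mul2l.
  by rewrite (leq_trans _ hn) // (leq_trans _ hn).
have hm0 : (0 < m)%N by apply: leq_trans d1 hdm.
have hS : (#|P| * t <= \sum_(p in P) #|N p|)%N.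
  rewrite -(ler_nat R) -edgeS.
  have hd0 : (0 : R) < #|dist_triples A A B|%:R.
    by rewrite ltr0n distE cardsX muln_gt0 hPpos.
  move: hdens; rewrite /density ler_pdivlMr // => hd.
  apply: le_trans hd; rewrite distE cardsX !natrM mulrA.
  rewrite [_ * #|P|%:R]mulrC -mulrA ler_wpM2l // mulrC.
have hJ := @jensen_ffact _ P (fun p => #|N p|) d t hS.
pose X (f : {ffun 'I_d -> T}) := #|[set p in P | f \in Inj (N p)]|.
have hsw : (\sum_(p in P) #|N p| ^_ d = \sum_(f in Inj B) X f)%N.
  rewrite (eq_bigr (fun p => #|Inj (N p)|)); last by move=> p _; rewrite cardInj.
  rewrite (eq_bigr (fun p => \sum_(f | (f \in Inj B) && (f \in Inj (N p))) 1)%N); last first.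
    move=> p _; rewrite sum1dep_card; apply: eq_card => f; rewrite !inE.
    case: (boolP (injectiveb f)) => //= _.
    case: (boolP [forall i, f i \in N p]) => hf; last by rewrite andbF.
    rewrite andbT; apply/esym/fintype.forallP => i.
    by move: hf => /fintype.forallP /(_ i); rewrite !inE => /andP [].
  rewrite (exchange_big_dep (mem (Inj B))) /=; last by move=> p f _ /andP [].
  apply: eq_bigr => f fB; rewrite sum1dep_card; apply: eq_card => p.
  by rewrite [in LHS]inE [in RHS]inE fB.
have InjB0 : (0 < #|Inj B|)%N by rewrite cardInj ffact_gt0.
case: (eq_bigmax_cond X InjB0) => f0 f0B hmax.
pose G := [set p in P | f0 \in Inj (N p)].
have hG : (#|P| * t ^_ d <= m ^_ d * #|G|)%N.
  apply: (leq_trans hJ); rewrite hsw -cardInj.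
  apply: (leq_trans (n := \sum_(f in Inj B) X f0)); last by rewrite sum_nat_const.
  by apply: leq_sum => f fB; rewrite -hmax; apply: leq_bigmax_cond.
have hbig : (2 * (2 * d) * n < #|G|)%N.
  rewrite ltnNge; apply/negP => hle.
  have Hnat : ((n * n - n) * d`! * t.+1 ^ d <= 4 * d * n * m ^ d * d.+1 ^ d)%N.
    rewrite -cardP -mulnA.
    apply: (leq_trans (n := #|P| * (t ^_ d * d.+1 ^ d))).
      by rewrite leq_mul2l ffact_ratio // orbT.
    rewrite mulnA.
    apply: (leq_trans (n := m ^_ d * #|G| * d.+1 ^ d)).
      by rewrite leq_mul2r hG orbT.
    rewrite leq_mul2r; apply/orP; right.
    have h2 := ffact_le_exp m d.
    have h3 : (#|G| <= 4 * d * n)%N by apply: leq_trans hle _; rewrite !mulnA.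
    apply: (leq_trans (leq_mul h2 h3)); by rewrite mulnC.
  apply: (@numeric_contra R n%:R d%:R (expR 1) (expR 1 ^+ d) (eta ^+ d) (m%:R ^+ d)
     (t.+1%:R ^+ d) (d`!)%:R (d.+1%:R ^+ d)).
  - move: Hnat; rewrite -(ler_nat R) !natrM !natrX natrB ?natrM //.
    by rewrite -{1}(muln1 n) leq_mul2l (leq_trans _ hn) ?orbT.
  - exact: fact_bound.
  - by rewrite -exprMn ltrXn2r // -lt0n.
  - exact: hA'.
  - exact: he.
  - exact: hEde.
  - exact: H0.
  - exact: H1.
  - by rewrite exprn_gt0 // ltr0n.
  - by rewrite ltr0n fact_gt0.
  - exact: dr1.
  - by rewrite exprn_ge0.
have f0inj : injective f0.
  by move: f0B; rewrite inE => /andP [/injectiveP].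
have f0B' : forall i, f0 i \in B.
  by move: f0B; rewrite inE => /andP [_ /fintype.forallP].
have Gsym : forall x y, (x, y) \in G -> (y, x) \in G.
  move=> x y; rewrite !inE /= => /andP [/and3P [xA yA nxy] /andP [inj /fintype.forallP hf]].
  rewrite yA xA eq_sym nxy inj /=; apply/fintype.forallP => i; move: (hf i).
  by rewrite !inE /= set3_swap12.
have Girr : forall x y, (x, y) \in G -> x != y.
  by move=> x y; rewrite !inE /= => /andP [/and3P [_ _ ->]].
have GA : forall p, p \in G -> (p.1 \in A) && (p.2 \in A).
  by move=> p; rewrite !inE => /andP [/and3P [-> -> _]].
have cGV : @GV T G A = G.
  apply/setP => p; rewrite /GV finset.in_set; case: (boolP (p \in G)) => //= pG.
  exact: GA.
have [W [WA [W0 Wd]]] := @core T G Gsym (2 * d) A ltac:(by rewrite cGV).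
have [s [ss us As Gs]] := @grow T G Gsym Girr W (2 * d) W0 Wd (2 * d + 1) ltac:(by rewrite addn1).
have hs : size s = (2 * d + 2)%N by rewrite ss -addnS.
have [x0 _] : exists x0 : T, true.
  by case: s ss {us As Gs hs} => [//|x s'] _; exists x.
pose a i := nth x0 s i.
pose b j := odflt x0 (omap f0 (insub j)).
have bE : forall j (hj : (j < d)%N), exists u : 'I_d, val u = j /\ b j = f0 u.
  move=> j hj; rewrite /b; case: insubP => [u _ hu|]; last by rewrite hj.
  by exists u.
have hbB : forall j, (j < d)%N -> b j \in B.
  by move=> j hj; have [u [_ ->]] := bE j hj.
exists a, b; split.
  move=> i hi; rewrite /a.
  have : nth x0 s i \in W.
    by move/allP: As; apply; apply: mem_nth; rewrite hs.
  by move/(fintype.subsetP WA).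
split; first exact: hbB.
apply: (@tight_from T E A B d a b dAB) => //.
- move=> i hi; rewrite /a.
  have : nth x0 s i \in W.
    by move/allP: As; apply; apply: mem_nth; rewrite hs.
  by move/(fintype.subsetP WA).
- move=> i i' hi hi'; rewrite /a => e.
  by apply/eqP; rewrite -(nth_uniq x0 _ _ us) ?hs // e.
- move=> j j' hj hj'.
  have [u [hu ->]] := bE j hj; have [u' [hu' ->]] := bE j' hj'.
  by move=> /f0inj e; rewrite -hu -hu' e.
- move=> x j hx hj.
  have [u [_ ->]] := bE j hj.
  have := Gs x0 x hx.
  rewrite !inE => /andP [_ /andP [_ /fintype.forallP /(_ u)]].
  by rewrite !inE => /andP [_ ].
Qed.
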